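(* Let $\epsilon=1/50$, let $v\ge 1$, and let $t\in\{0,1\}^v$. Suppose that for every $s\in\{0,1\}^v$ we are given a bit $b_s$ satisfying $b_s=1$ if $\langle s,t\rangle/v>\epsilon$ and $b_s=0$ if $\langle s,t\rangle/v<\epsilon/2$. Let $t'\in\{0,1\}^v$ be any vector consistent with all the $b_s$, in the sense that $\langle s,t'\rangle/v>\epsilon$ for all $s$ with $b_s=1$ and $\langle s,t'\rangle/v<\epsilon/2$ for all $s$ with $b_s=0$. Then the Hamming distance between $t$ and $t'$ is at most $v/25$.
   Context: $\langle s,t\rangle=\sum_{i=1}^v s_it_i$ is the standard inner product. *)

(* Defs.v *)
From mathcomp Require Import all_boot all_order all_algebra.
Set Implicit Arguments. Unset Strict Implicit. Unset Printing Implicit Defensive.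
Import Order.TTheory GRing.Theory Num.Theory.

Definition ip (v : nat) (s t : 'I_v -> bool) : nat :=
  \sum_(i < v) (s i && t i).

Definition hamming (v : nat) (s t : 'I_v -> bool) : nat :=
  #|[set i : 'I_v | s i != t i]|.

Local Open Scope ring_scope.
Definition eps : rat := 1 / 50%:R.

(* Main.v *)
Require Import Defs.
From mathcomp Require Import all_boot all_order all_algebra.
From mathcomp Require Import ring lra.
Import Order.TTheory GRing.Theory Num.Theory.
Local Open Scope ring_scope.

Lemma aux (R : realFieldType) (A B v : R) : 0 < v -> A <= 1/50%:R * v -> B < 1/50%:R/2%:R * v -> A + B <= v / 25%:R.
Proof. move=> *. lra. Qed.
Lemma aux2 (R : realFieldType) : ~ (1/50%:R < (0:R)).
Proof. lra. Qed.
Lemma aux3 (R : realFieldType) : (0:R) < 1/50%:R/2%:R.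
Proof. lra. Qed.

Theorem lemma3 (v : nat) (hv : (1 <= v)%N) (t : 'I_v -> bool)
  (b : ('I_v -> bool) -> bool)
  (hb1 : forall s, eps < (ip s t)%:R / v%:R -> b s = true)
  (hb0 : forall s, (ip s t)%:R / v%:R < eps / 2%:R -> b s = false)
  (t' : 'I_v -> bool)
  (ht1 : forall s, b s = true -> eps < (ip s t')%:R / v%:R)
  (ht0 : forall s, b s = false -> (ip s t')%:R / v%:R < eps / 2%:R) :
  (hamming t t')%:R <= v%:R / 25%:R :> rat.
Proof.
pose s1 := fun i => t i && ~~ t' i.
pose s2 := fun i => t' i && ~~ t i.
have vpos : 0 < v%:R :> rat by rewrite ltr0n.
have H1 : ip s1 t' = 0%N.
  by rewrite /ip big1 // => i _; rewrite /s1; case: (t i); case: (t' i).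
have H2 : ip s2 t = 0%N.
  by rewrite /ip big1 // => i _; rewrite /s2; case: (t i); case: (t' i).
have Hh : hamming t t' = (ip s1 t + ip s2 t')%N.
  rewrite /hamming -sum1_card big_mkcond /ip -big_split /=.
  apply: eq_bigr => i _; rewrite inE /s1 /s2.
  by case: (t i); case: (t' i).
have b1 : b s1 = false.
  apply/negbTE/negP => /ht1; rewrite H1 mul0r /eps; exact: aux2.
have b2 : b s2 = false.
  apply: hb0; rewrite H2 mul0r /eps; exact: aux3.
have A : (ip s1 t)%:R <= eps * v%:R :> rat.
  rewrite -(ler_pdivrMr _ _ vpos) leNgt; apply/negP => /hb1; by rewrite b1.
have B : (ip s2 t')%:R < eps / 2%:R * v%:R :> rat.
  rewrite -(ltr_pdivrMr _ _ vpos); exact: ht0.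
rewrite Hh natrD; exact: aux vpos A B.
Qed.
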